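(* For every positive integer $b_1$ there exists $r^*_{b_1}\in[0,1]$ such that for every positive integer $b_2<m^*$ and every Nash equilibrium $\sigma^*$ of $\Gamma(b_1,b_2)$ whose attack strategy is supported on nonempty attack plans, $r(\sigma^* )=r^*_{b_1}$. (When $b_1<n^*$, every Nash equilibrium has attack strategy supported on plans of size $b_2$, and then $U_1(\sigma^* )=b_2r^*_{b_1}$ and $U_2(\sigma^* )=b_2(1-r^*_{b_1})$.)
   Context: Detection model: finite nonempty sets $\mathcal V$, $\mathcal E$, monitoring sets $\mathcal C_i\subseteq\mathcal E$ ($i\in\mathcal V$) with every $e\in\mathcal E$ in some $\mathcal C_i$; $\mathcal C_S=\bigcup_{i\in S}\mathcal C_i$; $F(S,T)=|\mathcal C_S\cap T|$. Set cover: $S\subseteq\mathcal V$ with $\mathcal C_S=\mathcal E$; $n^*$ = minimum size of a set cover. Set packing: $T\subseteq\mathcal E$ with $|\mathcal C_i\cap T|\le1$ for all $i$; $m^*$ = maximum size of a set packing. Game $\Gamma(b_1,b_2)$ ($b_1,b_2$ positive integers): $\mathcal A_1=\{S\subseteq\mathcal V:|S|\le b_1\}$, $\mathcal A_2=\{T\subseteq\mathcal E:|T|\le b_2\}$; mixed strategies $\sigma^1\in\Delta(\mathcal A_1)$, $\sigma^2\in\Delta(\mathcal A_2)$ (independent); payoffs $U_1=\mathbb E[F(S,T)]$, $U_2=\mathbb E[|T|]-\mathbb E[F(S,T)]$; Nash equilibrium as usual. Expected detection rate $r(\sigma)=\mathbb E_{S\sim\sigma^1,T\sim\sigma^2}[F(S,T)/|T|]$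 for profiles whose attack strategy is supported on nonempty sets. *)

(* Defs.v *)
From HB Require Import structures.
From mathcomp Require Import all_boot all_order all_algebra.
Set Implicit Arguments. Unset Strict Implicit. Unset Printing Implicit Defensive.
Import Order.TTheory GRing.Theory Num.Theory.

Section Detection.
Variables (V E : finType) (C : V -> {set E}).

Definition CS (S : {set V}) : {set E} := \bigcup_(i in S) C i.
Definition Fdet (S : {set V}) (T : {set E}) : nat := #|CS S :&: T|.

Definition is_cover (S : {set V}) : bool := CS S == [set: E].
Definition is_packing (T : {set E}) : bool := [forall i, #|C i :&: T| <= 1].

(* n* : minimum size of a set cover ([set: V] is one under the covering assumption) *)
Definition n_star : nat := \big[minn/#|V|]_(S : {set V} | is_cover S) #|S|.
(* m* : maximum size of a set packing (set0 is one) *)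
Definition m_star : nat := \max_(T : {set E} | is_packing T) #|T|.

Local Open Scope ring_scope.
Variable R : realFieldType.

(* a mixed strategy over {X : |X| <= b}, represented as a probability
   vector on all subsets vanishing outside the action set *)
Definition is_mixed (X : finType) (b : nat) (s : {set X} -> R) : Prop :=
  (forall A, 0 <= s A) /\ \sum_(A : {set X}) s A = 1 /\
  (forall A, s A != 0 -> (#|A| <= b)%N).

Definition U1 (s1 : {set V} -> R) (s2 : {set E} -> R) : R :=
  \sum_(S : {set V}) \sum_(T : {set E}) s1 S * s2 T * (Fdet S T)%:R.

Definition U2 (s1 : {set V} -> R) (s2 : {set E} -> R) : R :=
  \sum_(S : {set V}) \sum_(T : {set E}) s1 S * s2 T * ((#|T|)%:R - (Fdet S T)%:R).

Definition is_NE (b1 b2 : nat) (s1 : {set V} -> R) (s2 : {set E} -> R) : Prop :=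
  is_mixed b1 s1 /\ is_mixed b2 s2 /\
  (forall s1', is_mixed b1 s1' -> U1 s1' s2 <= U1 s1 s2) /\
  (forall s2', is_mixed b2 s2' -> U2 s1 s2' <= U2 s1 s2).

Definition attack_nonempty (s2 : {set E} -> R) : Prop :=
  forall T, s2 T != 0 -> T != set0.

Definition rate (s1 : {set V} -> R) (s2 : {set E} -> R) : R :=
  \sum_(S : {set V}) \sum_(T : {set E}) s1 S * s2 T * ((Fdet S T)%:R / (#|T|)%:R).

End Detection.

(* Main.v *)
Require Import Defs.
From HB Require Import structures.
From mathcomp Require Import all_boot all_order all_algebra.
From mathcomp Require Import ring lra zify.
From Stdlib Require Import Classical.
Import Order.TTheory GRing.Theory Num.Theory.
Set Implicit Arguments. Unset Strict Implicit. Unset Printing Implicit Defensive.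
Local Open Scope ring_scope.

Definition pr (R : realFieldType) (V E : finType) (C : V -> {set E})
  (s1 : {set V} -> R) (e : E) : R := \sum_(S : {set V}) s1 S * (e \in CS C S)%:R.

Lemma card_sumR (R : realFieldType) (E : finType) (A : {set E}) :
  (#|A|%:R : R) = \sum_(e : E) (e \in A)%:R.
Proof.
rewrite -sum1_card natr_sum big_mkcond /=; apply: eq_bigr => e _.
by case: (e \in A).
Qed.

Lemma Fdet_sum (R : realFieldType) (V E : finType) (C : V -> {set E}) S T :
  ((Fdet C S T)%:R : R) = \sum_(e : E) (e \in CS C S)%:R * (e \in T)%:R.
Proof.
rewrite /Fdet card_sumR; apply: eq_bigr => e _.
by rewrite inE; case: (e \in CS C S); case: (e \in T); rewrite ?mulr0 ?mulr1 ?mul0r.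
Qed.

Lemma BR (R : realFieldType) (X : finType) (b : nat) (s f : {set X} -> R) (A B : {set X}) :
  is_mixed b s ->
  (forall s', is_mixed b s' -> \sum_(Y : {set X}) s' Y * f Y <= \sum_(Y : {set X}) s Y * f Y) ->
  s A != 0 -> (#|B| <= b)%N -> f B <= f A.
Proof.
move=> [s0 [s1 sb]] Hbr sA bB.
pose s' Y := s Y + (if Y == B then s A else 0) - (if Y == A then s A else 0).
have Hm : is_mixed b s'.
  split; [|split].
  - move=> Y; rewrite /s'; case: (Y =P A) => [->|_].
      by have := s0 A; case: (A == B) => ?; lra.
    rewrite subr0; apply: addr_ge0 => //; case: (Y == B) => //.
  - rewrite /s' big_split big_split /= sumrN s1 -!big_mkcond /= !big_pred1_eq; lra.
  - move=> Y; rewrite /s'; case: (Y =P B) => [-> //|_].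
    case: (Y =P A) => [->|_]; first by move=> _; apply: sb.
    by rewrite addr0 subr0; apply: sb.
have := Hbr s' Hm.
rewrite /s' (eq_bigr (fun Y => s Y * f Y + ((if Y == B then s A else 0) * f Y
   - (if Y == A then s A else 0) * f Y))); last by move=> Y _; ring.
rewrite big_split /= big_split /= sumrN.
have EB : \sum_(Y : {set X}) (if Y == B then s A else 0) * f Y = s A * f B.
  rewrite (eq_bigr (fun Y => if Y == B then s A * f B else 0)).
    by rewrite -big_mkcond big_pred1_eq.
  by move=> Y _; case: (Y =P B) => [->|]; rewrite ?mul0r.
have EA : \sum_(Y : {set X}) (if Y == A then s A else 0) * f Y = s A * f A.
  rewrite (eq_bigr (fun Y => if Y == A then s A * f A else 0)).
    by rewrite -big_mkcond big_pred1_eq.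
  by move=> Y _; case: (Y =P A) => [->|]; rewrite ?mul0r.
rewrite EA EB => H.

have sApos : 0 < s A by rewrite lt_def sA s0.
have : s A * (f B - f A) <= 0 by rewrite mulrBr; lra.
by rewrite pmulr_rle0 // subr_le0.
Qed.
Definition qm (R : realFieldType) (E : finType) (s2 : {set E} -> R) (e : E) : R :=
  \sum_(T : {set E}) s2 T * (e \in T)%:R.
Definition gS (R : realFieldType) (V E : finType) (C : V -> {set E})
  (s2 : {set E} -> R) (S : {set V}) : R := \sum_(T : {set E}) s2 T * (Fdet C S T)%:R.
Definition kT (R : realFieldType) (V E : finType) (C : V -> {set E})
  (s1 : {set V} -> R) (T : {set E}) : R := \sum_(S : {set V}) s1 S * (Fdet C S T)%:R.

Lemma U1_S (R : realFieldType) (V E : finType) (C : V -> {set E}) (s1 : {set V} -> R) (s2 : {set E} -> R) :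
  U1 C s1 s2 = \sum_(S : {set V}) s1 S * gS C s2 S.
Proof. by apply: eq_bigr => S _; rewrite /gS mulr_sumr; apply: eq_bigr => T _; rewrite mulrA. Qed.

Lemma U1_T (R : realFieldType) (V E : finType) (C : V -> {set E}) (s1 : {set V} -> R) (s2 : {set E} -> R) :
  U1 C s1 s2 = \sum_(T : {set E}) s2 T * kT C s1 T.
Proof.
rewrite /U1 exchange_big; apply: eq_bigr => T _; rewrite /kT mulr_sumr.
apply: eq_bigr => S _; ring.
Qed.

Lemma U2_T (R : realFieldType) (V E : finType) (C : V -> {set E}) (s1 : {set V} -> R) (s2 : {set E} -> R) :
  (\sum_S s1 S = 1) ->
  U2 C s1 s2 = \sum_(T : {set E}) s2 T * (#|T|%:R - kT C s1 T).
Proof.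
move=> H1.
rewrite /U2 exchange_big; apply: eq_bigr => T _.
transitivity (s2 T * (#|T|%:R * \sum_S s1 S - kT C s1 T)); last by rewrite H1 mulr1.
rewrite mulr_sumr /kT -sumrB mulr_sumr.
by apply: eq_bigr => S _; ring.
Qed.

Lemma rate_T (R : realFieldType) (V E : finType) (C : V -> {set E}) (s1 : {set V} -> R) (s2 : {set E} -> R) :
  rate C s1 s2 = \sum_(T : {set E}) s2 T * (kT C s1 T / #|T|%:R).
Proof.
rewrite /rate exchange_big; apply: eq_bigr => T _; rewrite /kT mulr_suml mulr_sumr.
apply: eq_bigr => S _; ring.
Qed.

Lemma kT_pr (R : realFieldType) (V E : finType) (C : V -> {set E}) (s1 : {set V} -> R) T :
  kT C s1 T = \sum_(e : E) (e \in T)%:R * pr C s1 e.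
Proof.
rewrite /kT /pr.
rewrite (eq_bigr (fun S => \sum_e s1 S * ((e \in CS C S)%:R * (e \in T)%:R))); last first.
  by move=> S _; rewrite Fdet_sum mulr_sumr.
rewrite exchange_big; apply: eq_bigr => e _; rewrite mulr_sumr; apply: eq_bigr => S _; ring.
Qed.

Lemma gS_qm (R : realFieldType) (V E : finType) (C : V -> {set E}) (s2 : {set E} -> R) S :
  gS C s2 S = \sum_(e : E) (e \in CS C S)%:R * qm s2 e.
Proof.
rewrite /gS /qm.
rewrite (eq_bigr (fun T => \sum_e s2 T * ((e \in CS C S)%:R * (e \in T)%:R))); last first.
  by move=> T _; rewrite Fdet_sum mulr_sumr.
rewrite exchange_big; apply: eq_bigr => e _; rewrite mulr_sumr; apply: eq_bigr => T _; ring.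
Qed.

Lemma ind01 (R : realFieldType) (b : bool) : 0 <= (b%:R : R) <= 1.
Proof. by case: b; rewrite ?lexx ?ler01. Qed.

Lemma pr_bounds (R : realFieldType) (V E : finType) (C : V -> {set E}) b (s1 : {set V} -> R) e :
  is_mixed b s1 -> 0 <= pr C s1 e <= 1.
Proof.
move=> [s0 [s1e _]]; apply/andP; split.
  by apply: sumr_ge0 => S _; rewrite mulr_ge0 // ; case/andP: (ind01 R (e \in CS C S)).
rewrite -s1e; apply: ler_sum => S _; rewrite -{2}(mulr1 (s1 S)); apply: ler_wpM2l => //.
by case/andP: (ind01 R (e \in CS C S)).
Qed.

Lemma qm_bounds (R : realFieldType) (E : finType) b (s2 : {set E} -> R) (e : E) :
  is_mixed b s2 -> 0 <= qm s2 e <= 1.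
Proof.
move=> [s0 [s1e _]]; apply/andP; split.
  by apply: sumr_ge0 => S _; rewrite mulr_ge0 // ; case/andP: (ind01 R (e \in S)).
rewrite -s1e; apply: ler_sum => S _; rewrite -{2}(mulr1 (s2 S)); apply: ler_wpM2l => //.
by case/andP: (ind01 R (e \in S)).
Qed.

Lemma BR_def (R : realFieldType) (V E : finType) (C : V -> {set E}) b1 b2
  (s1 : {set V} -> R) (s2 : {set E} -> R) (S S' : {set V}) :
  is_NE C b1 b2 s1 s2 -> s1 S != 0 -> (#|S'| <= b1)%N -> gS C s2 S' <= gS C s2 S.
Proof.
move=> [m1 [m2 [h1 h2]]] sS cS'; apply: (BR m1) => // s' ms'.
by rewrite -!U1_S; apply: h1.
Qed.

Lemma BR_att (R : realFieldType) (V E : finType) (C : V -> {set E}) b1 b2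
  (s1 : {set V} -> R) (s2 : {set E} -> R) (T T' : {set E}) :
  is_NE C b1 b2 s1 s2 -> s2 T != 0 -> (#|T'| <= b2)%N ->
  #|T'|%:R - kT C s1 T' <= #|T|%:R - kT C s1 T.
Proof.
move=> [m1 [m2 [h1 h2]]] sT cT'.
apply: (BR (f := fun X => #|X|%:R - kT C s1 X) m2) => // s' ms'.
by case: m1 => _ [H1 _]; rewrite -!U2_T //; apply: h2.
Qed.

Lemma G2 (R : realFieldType) (X : finType) b (s f : {set X} -> R) c :
  is_mixed b s -> (forall A, s A != 0 -> c <= f A) -> c <= \sum_A s A * f A.
Proof.
move=> [s0 [s1 _]] H; rewrite -[c]mul1r -s1 mulr_suml; apply: ler_sum => A _.
have [->|nz] := eqVneq (s A) 0; first by rewrite !mul0r.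
by apply: ler_wpM2l => //; apply: H.
Qed.

Lemma G3 (R : realFieldType) (X : finType) b (s f : {set X} -> R) c :
  is_mixed b s -> (forall A, s A != 0 -> f A <= c) -> \sum_A s A * f A <= c.
Proof.
move=> [s0 [s1 _]] H; rewrite -[c]mul1r -s1 mulr_suml; apply: ler_sum => A _.
have [->|nz] := eqVneq (s A) 0; first by rewrite !mul0r.
by apply: ler_wpM2l => //; apply: H.
Qed.

Lemma inCS (V E : finType) (C : V -> {set E}) (S : {set V}) e :
  reflect (exists2 i, i \in S & e \in C i) (e \in CS C S).
Proof. by apply: (iffP bigcupP). Qed.

Lemma CS_sub (V E : finType) (C : V -> {set E}) (S S' : {set V}) e :
  S \subset S' -> e \in CS C S -> e \in CS C S'.
Proof.
move=> sub /inCS [i iS ei]; apply/inCS; exists i => //; exact: (subsetP sub).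
Qed.

Lemma G1 (R : realFieldType) (E : finType) (q : E -> R) (X Y : {set E}) e0 :
  (forall e, 0 <= q e) -> (forall e, e \in X -> e \in Y) -> e0 \in Y -> e0 \notin X ->
  \sum_e (e \in X)%:R * q e + q e0 <= \sum_e (e \in Y)%:R * q e.
Proof.
move=> q0 XY e0Y e0X.
have -> : q e0 = \sum_e (e == e0)%:R * q e.
  rewrite (bigD1 e0) //= eqxx mul1r big1 ?addr0 // => e /negbTE ->; by rewrite mul0r.
rewrite -big_split; apply: ler_sum => e _ /=; rewrite -mulrDl.
apply: ler_wpM2r => //.
case: (e =P e0) => [->|_]; first by rewrite (negbTE e0X) e0Y /= add0r.
case eX: (e \in X); first by rewrite (XY _ eX) /= addr0.
by rewrite addr0; case: (e \in Y).
Qed.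

Lemma averaging (R : realFieldType) (E : finType) (f : E -> R) (k : nat) :
  forall n (P : {set E}), #|P| = (k + n)%N ->
  exists T : {set E}, [/\ T \subset P, #|T| = k &
     #|P|%:R * \sum_(e in T) f e <= k%:R * \sum_(e in P) f e].
Proof.
elim=> [|n IH] P cP.
  by exists P; rewrite subxx cP addn0; split.
have : (0 < #|P|)%N by rewrite cP addnS.
case/card_gt0P => x0 x0P.
set e := [arg max_(x > x0 in P) f x]%O.
have eP : e \in P by rewrite /e; case: (arg_maxP f x0P).
have emax : forall x, x \in P -> f x <= f e.
  by rewrite /e; case: (arg_maxP f x0P) => y _ H x xP; apply: H.
have cP' : #|P :\ e| = (k + n)%N.
  by move: cP; rewrite (cardsD1 e) eP addnS add1n => -[].
have [T [TP cT HT]] := IH _ cP'.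
exists T; split.
- by apply: (subset_trans TP); apply: subsetDl.
- by [].
have sT : \sum_(x in T) f x <= k%:R * f e.
  rewrite -cT card_sumR big_mkcond /= mulr_suml; apply: ler_sum => x _.
  case xT: (x \in T); rewrite ?mul1r ?mul0r //.
  apply: emax; move/subsetP: TP => /(_ x xT); rewrite inE => /andP[].
  done.
rewrite (bigD1 e eP) /= cP.
have -> : \sum_(i in P | i != e) f i = \sum_(i in P :\ e) f i.
  by apply: eq_bigl => x; rewrite !inE andbC.
rewrite cP' in HT.
rewrite addnS -addn1 natrD mulrDl mul1r mulrDr addrC; apply: lerD => //.
Qed.

Lemma ind_le_sum (R : realFieldType) (V E : finType) (C : V -> {set E}) (S : {set V}) e :
  ((e \in CS C S)%:R : R) <= \sum_(i in S) (e \in C i)%:R.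
Proof.
case: (inCS C S e) => [[i iS ei]|]; last first.
  by move=> _; apply: sumr_ge0 => i _; case/andP: (ind01 R (e \in C i)).
rewrite (bigD1 i iS) /= ei -[X in X <= _]addr0; apply: lerD => //.
by apply: sumr_ge0 => j _; case/andP: (ind01 R (e \in C j)).
Qed.

Lemma PK (R : realFieldType) (V E : finType) (C : V -> {set E}) b1
  (s1 : {set V} -> R) (P : {set E}) :
  is_packing C P -> is_mixed b1 s1 -> \sum_(e in P) pr C s1 e <= b1%:R.
Proof.
move=> /forallP pk ms.
have -> : \sum_(e in P) pr C s1 e =
   \sum_S s1 S * \sum_(e in P) (e \in CS C S)%:R.
  rewrite /pr exchange_big /=; apply: eq_bigr => S _; by rewrite mulr_sumr.
apply: (G3 ms) => S sS.
apply: (@le_trans _ _ (#|S|%:R)); last first.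
  by rewrite ler_nat; case: ms => _ [_ /(_ S sS)].
apply: (@le_trans _ _ (\sum_(e in P) \sum_(i in S) (e \in C i)%:R)).
  by apply: ler_sum => e _; apply: ind_le_sum.
rewrite exchange_big /= -sum1_card natr_sum; apply: ler_sum => i _.
have -> : \sum_(e in P) ((e \in C i)%:R : R) = #|C i :&: P|%:R.
  rewrite card_sumR big_mkcond /=; apply: eq_bigr => e _.
  by rewrite inE andbC; case: (e \in P).
by rewrite -[1]/(1%:R) ler_nat; apply: pk.
Qed.

Lemma mstar_pack (V E : finType) (C : V -> {set E}) :
  exists P, is_packing C P /\ #|P| = m_star C.
Proof.
have p0 : is_packing C set0 by apply/forallP => i; rewrite setI0 cards0.
exists [arg max_(T > set0 | is_packing C T) #|T|]%N; split.
  by case: (arg_maxnP (fun T : {set E} => #|T|) p0).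
by rewrite /m_star (bigop.bigmax_eq_arg _ p0).
Qed.

Lemma PW (R : realFieldType) (V E : finType) (C : V -> {set E}) (S0 : {set V}) e :
  \sum_(j in S0) (((e \in CS C S0)%:R : R) - (e \in CS C (S0 :\ j))%:R)
    <= (e \in CS C S0)%:R.
Proof.
case: (inCS C S0 e) => [[k kS ek]|nE].
  have eS : e \in CS C S0 by apply/inCS; exists k.
  rewrite (bigD1 k kS) /= big1; last first.
    move=> j /andP[jS jk].
    have -> : e \in CS C (S0 :\ j) by apply/inCS; exists k => //; rewrite !inE eq_sym jk.
    by rewrite subrr.
  rewrite addr0 lerBlDr lerDl; by case/andP: (ind01 R (e \in CS C (S0 :\ k))).
have eS : e \in CS C S0 = false by apply/negP => /inCS.
rewrite big1 // => j _.
have -> : e \in CS C (S0 :\ j) = false.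
  by apply/negP => /(CS_sub (subsetDl S0 [set j])); rewrite eS.
by rewrite subrr.
Qed.

Lemma L0 (R : realFieldType) (V E : finType) (C : V -> {set E})
  (hcov : forall e : E, exists i : V, e \in C i) b1 b2 (hb1 : (0 < b1)%N)
  (s1 : {set V} -> R) (s2 : {set E} -> R) :
  is_NE C b1 b2 s1 s2 -> (b2 < m_star C)%N -> forall e0,
  qm s2 e0 = 1 -> pr C s1 e0 < 1 -> False.
Proof.
move=> NE hm e0 qe0 pe0.
have [m1 [m2 _]] := NE.
have qpos : forall e, 0 <= qm s2 e by move=> e; case/andP: (qm_bounds e m2).
have [S0 [sS0 nS0]] : exists S0, s1 S0 != 0 /\ e0 \notin CS C S0.
  case: (boolP [exists S0, (s1 S0 != 0) && (e0 \notin CS C S0)]).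
    by move=> /existsP[S0 /andP[? ?]]; exists S0.
  move=> /existsPn H; exfalso.
  have : pr C s1 e0 = 1.
    case: m1 => _ [<- _]; rewrite /pr; apply: eq_bigr => S _.
    have := H S; rewrite negb_and !negbK.
    case/orP => [/eqP->|->]; by rewrite ?mul0r ?mulr1.
  by move=> h; move: pe0; rewrite h ltxx.
have [i ei] := hcov e0.
have cS0 : (#|S0| <= b1)%N by case: m1 => _ [_ /(_ S0 sS0)].
have key : forall X Y : {set V},
    (forall e, e \in CS C X -> e \in CS C Y) -> e0 \in CS C Y -> e0 \notin CS C X ->
    gS C s2 X + 1 <= gS C s2 Y.
  by move=> X Y h1 h2 h3; have := G1 qpos h1 h2 h3; rewrite qe0 -!gS_qm.
have b1S0 : (b1 <= #|S0|)%N.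
  rewrite leqNgt; apply/negP => lt.
  have c' : (#|i |: S0| <= b1)%N by rewrite cardsU1; case: (i \notin S0) => /=; lia.
  have := BR_def NE sS0 c'.
  have := key S0 (i |: S0) (fun e => CS_sub (subsetUr [set i] S0) (e:=e)).
  have e0' : e0 \in CS C (i |: S0) by apply/inCS; exists i => //; rewrite setU11.
  move=> /(_ e0' nS0); lra.
have hj : forall j, j \in S0 -> 1 <= gS C s2 S0 - gS C s2 (S0 :\ j).
  move=> j jS.
  have c' : (#|i |: (S0 :\ j)| <= b1)%N.
    move: cS0; rewrite cardsU1 (cardsD1 j S0) jS; case: (i \notin S0 :\ j) => /=; lia.
  have := BR_def NE sS0 c'.
  have := key (S0 :\ j) (i |: (S0 :\ j)) (fun e => CS_sub (subsetUr [set i] (S0 :\ j)) (e:=e)).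
  have e0' : e0 \in CS C (i |: (S0 :\ j)) by apply/inCS; exists i => //; rewrite setU11.
  have n' : e0 \notin CS C (S0 :\ j).
    by apply/negP => /(CS_sub (subsetDl S0 [set j])); apply/negP.
  move=> /(_ e0' n'); lra.
have gS0 : b1%:R <= gS C s2 S0.
  apply: (@le_trans _ _ (#|S0|%:R)); first by rewrite ler_nat.
  apply: (@le_trans _ _ (\sum_(j in S0) (gS C s2 S0 - gS C s2 (S0 :\ j)))).
    by rewrite -sum1_card natr_sum; apply: ler_sum => j jS; apply: hj.
  have -> : \sum_(j in S0) (gS C s2 S0 - gS C s2 (S0 :\ j)) =
     \sum_e (\sum_(j in S0) (((e \in CS C S0)%:R : R) - (e \in CS C (S0 :\ j))%:R)) * qm s2 e.
    rewrite (eq_bigr (fun j => \sum_e (((e \in CS C S0)%:R : R) - (e \in CS C (S0 :\ j))%:R) * qm s2 e)); last first.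
      by move=> j _; rewrite !gS_qm -sumrB; apply: eq_bigr => e _; rewrite mulrBl.
    rewrite exchange_big /=; apply: eq_bigr => e _; by rewrite mulr_suml.
  rewrite gS_qm; apply: ler_sum => e _; apply: ler_wpM2r => //; exact: PW.
have U1ge : b1%:R <= U1 C s1 s2.
  rewrite U1_S; apply: (G2 m1) => S sS; apply: (le_trans gS0); exact: BR_def NE sS cS0.
have sum1 : \sum_S s1 S = 1 by case: m1 => _ [].
have U12 : U1 C s1 s2 + U2 C s1 s2 <= b2%:R.
  rewrite U1_T U2_T // -big_split /=.
  rewrite (eq_bigr (fun T => s2 T * #|T|%:R)); last by move=> T _; ring.
  by apply: (G3 m2) => T sT; rewrite ler_nat; case: m2 => _ [_ /(_ T sT)].
have [P [pkP cP]] := mstar_pack C.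
have cP' : #|P| = (b2 + (m_star C - b2))%N by rewrite cP subnKC // ltnW.
have [T' [T'P cT' HT]] := averaging (pr C s1) cP'.
have hP := PK pkP m1.
have U2ge : #|T'|%:R - kT C s1 T' <= U2 C s1 s2.
  rewrite U2_T //; apply: (G2 m2) => T sT; apply: BR_att NE sT _; by rewrite cT'.
have kE : kT C s1 T' = \sum_(e in T') pr C s1 e.
  rewrite kT_pr [in RHS]big_mkcond /=; apply: eq_bigr => e _; by case: (e \in T'); rewrite ?mul1r ?mul0r.
rewrite kE cT' in U2ge.
rewrite cP in HT.
set a := \sum_(e in T') pr C s1 e in U2ge HT.
set pi := \sum_(e in P) pr C s1 e in HT hP.
have ha : b1%:R <= a by lra.
have hmb : (b2%:R : R) < (m_star C)%:R by rewrite ltr_nat.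
have hb1' : (0 : R) < b1%:R by rewrite ltr0n.
have hb2 : (0 : R) <= b2%:R by rewrite ler0n.
nra.
Qed.

Lemma hh_eq (R : realFieldType) (V E : finType) (C : V -> {set E}) (s1 : {set V} -> R) (T : {set E}) :
  #|T|%:R - kT C s1 T = \sum_(e in T) (1 - pr C s1 e).
Proof.
rewrite kT_pr card_sumR -sumrB [in RHS]big_mkcond /=; apply: eq_bigr => e _.
by case: (e \in T); rewrite ?mul1r ?mul0r ?subrr.
Qed.

Lemma C1 (R : realFieldType) (V E : finType) (C : V -> {set E})
  (hcov : forall e : E, exists i : V, e \in C i) b1 b2 (hb1 : (0 < b1)%N)
  (s1 : {set V} -> R) (s2 : {set E} -> R) :
  is_NE C b1 b2 s1 s2 -> (b2 < m_star C)%N -> forall es,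
  (forall e, pr C s1 es <= pr C s1 e) -> pr C s1 es < 1 ->
  forall T, s2 T != 0 -> #|T| = b2 /\ forall e, e \in T -> pr C s1 e = pr C s1 es.
Proof.
move=> NE hm es hmin hlt.
have [m1 [m2 _]] := NE.
pose A := [set e | pr C s1 e == (pr C s1 es)].
have hh : forall T : {set E}, #|T|%:R - kT C s1 T = \sum_(e in T) (1 - pr C s1 e) by move=> T; apply: hh_eq.
case: (leqP b2 #|A|) => hA.
  have cA : #|A| = (b2 + (#|A| - b2))%N by rewrite subnKC.
  have [T' [T'A cT' _]] := averaging (pr C s1) cA.
  have hT' : #|T'|%:R - kT C s1 T' = b2%:R * (1 - (pr C s1 es)).
    rewrite hh -cT' card_sumR [in LHS]big_mkcond mulr_suml /=; apply: eq_bigr => e _.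
    case eT: (e \in T'); rewrite ?mul1r ?mul0r //.
    by move/subsetP: T'A => /(_ e eT); rewrite inE => /eqP->.
  move=> T sT.
  have := BR_att NE sT (eq_leq cT'); rewrite hT' hh => H1.
  have cT : (#|T| <= b2)%N by case: m2 => _ [_ /(_ T sT)].
  have H2 : \sum_(e in T) (1 - pr C s1 e) <= #|T|%:R * (1 - (pr C s1 es)).
    rewrite card_sumR mulr_suml [in X in X <= _](big_mkcond) /=; apply: ler_sum => e _.
    case: (e \in T); rewrite ?mul1r ?mul0r //; have := hmin e; lra.
  have pmlt : 0 < 1 - (pr C s1 es) by lra.
  have cTR : (#|T|%:R : R) <= b2%:R by rewrite ler_nat.
  have Heq : #|T|%:R * (1 - (pr C s1 es)) = b2%:R * (1 - (pr C s1 es)).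
    apply/eqP; rewrite eq_le; apply/andP; split; first by apply: ler_wpM2r; lra.
    lra.
  have ecT : #|T| = b2.
    by move: Heq => /(mulIf (lt0r_neq0 pmlt)) /eqP; rewrite eqr_nat => /eqP.
  split => // e eT.
  have H0 : \sum_(e in T) (pr C s1 e - (pr C s1 es)) = 0.
    have Hs : \sum_(e in T) (1 - pr C s1 e) = #|T|%:R * (1 - (pr C s1 es)) by lra.
    rewrite (eq_bigr (fun e => (1 - pr C s1 es) - (1 - pr C s1 e))); last by move=> x _; ring.
    by rewrite sumrB sumr_const -mulr_natl Hs subrr.
  have H3 : forall i : E, i \in T -> 0 <= pr C s1 i - pr C s1 es.
    by move=> x _; have := hmin x; lra.
  by have := psumr_eq0P H3 H0 eT => h; lra.
exfalso.
have allT : forall T, s2 T != 0 -> es \in T.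
  move=> T sT; apply/negPn/negP => nes.
  have cT : (#|T| <= b2)%N by case: m2 => _ [_ /(_ T sT)].
  case: (ltnP #|T| b2) => hT.
    have c' : (#|es |: T| <= b2)%N by rewrite cardsU1 nes.
    have := BR_att NE sT c'; rewrite !hh big_setU1 //=; lra.
  have : ~~ (T \subset A).
    apply/negP => /subset_leq_card; lia.
  case/subsetPn => f fT fA.
  have pf : (pr C s1 es) < pr C s1 f.
    by rewrite lt_def hmin andbT; move: fA; rewrite inE eq_sym.
  have c' : (#|es |: (T :\ f)| <= b2)%N.
    rewrite cardsU1; move: cT; rewrite (cardsD1 f T) fT; case: (es \notin T :\ f) => /=; lia.
  have := BR_att NE sT c'; rewrite !hh big_setU1 /=; last by rewrite inE negb_and nes orbT.
  rewrite (big_setD1 f fT) /=; lra.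
apply: (L0 hcov hb1 NE hm (e0 := es)) => //.
case: m2 => s0 [<- _]; rewrite /qm; apply: eq_bigr => T _.
have [->|nz] := eqVneq (s2 T) 0; first by rewrite !mul0r.
by rewrite allT // mulr1.
Qed.

Lemma sum_supp (R : realFieldType) (X : finType) b (s f : {set X} -> R) c :
  is_mixed b s -> (forall A, s A != 0 -> f A = c) -> \sum_A s A * f A = c.
Proof.
move=> ms H; apply/eqP; rewrite eq_le; apply/andP; split.
  by apply: (G3 ms) => A /H ->.
by apply: (G2 ms) => A /H ->.
Qed.

Lemma minex (R : realFieldType) (E : finType) (f : E -> R) :
  (0 < #|E|)%N -> exists es, forall e, f es <= f e.
Proof.
case/card_gt0P => x0 _.
exists [arg min_(e < x0) f e]%O.
by case: (arg_minP f (erefl (predT x0))) => y _ H e; apply: H.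
Qed.

Lemma kT_in (R : realFieldType) (V E : finType) (C : V -> {set E}) (s1 : {set V} -> R) (T : {set E}) :
  kT C s1 T = \sum_(e in T) pr C s1 e.
Proof.
rewrite kT_pr [in RHS]big_mkcond /=; apply: eq_bigr => e _.
by case: (e \in T); rewrite ?mul1r ?mul0r.
Qed.

Lemma good (R : realFieldType) (V E : finType) (C : V -> {set E})
  (hcov : forall e : E, exists i : V, e \in C i) b1 b2 (hb1 : (0 < b1)%N)
  (s1 : {set V} -> R) (s2 : {set E} -> R) :
  is_NE C b1 b2 s1 s2 -> (0 < b2)%N -> (b2 < m_star C)%N -> forall es,
  (forall e, pr C s1 es <= pr C s1 e) -> pr C s1 es < 1 ->
  [/\ U1 C s1 s2 = b2%:R * pr C s1 es, U2 C s1 s2 = b2%:R * (1 - pr C s1 es)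
    & rate C s1 s2 = pr C s1 es].
Proof.
move=> NE hb2 hm es hmin hlt.
have [m1 [m2 _]] := NE.
have H := C1 hcov hb1 NE hm hmin hlt.
have kE : forall T, s2 T != 0 -> kT C s1 T = b2%:R * pr C s1 es.
  move=> T sT; have [cT HT] := H T sT.
  rewrite kT_in (eq_bigr (fun _ => pr C s1 es)); last by move=> e; apply: HT.
  by rewrite sumr_const cT mulr_natl.
split.
- by rewrite U1_T; apply: (sum_supp (f := kT C s1) m2) => T sT; rewrite kE.
- rewrite U2_T; last by case: m1 => _ [].
  by apply: (sum_supp (f := fun T => #|T|%:R - kT C s1 T) m2) => T sT; rewrite kE //; have [-> _] := H T sT; ring.
- rewrite rate_T; apply: (sum_supp (f := fun T => kT C s1 T / #|T|%:R) m2) => T sT; rewrite kE //; have [-> _] := H T sT.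
  have b2n : (b2%:R : R) != 0 by rewrite pnatr_eq0 -lt0n.
  by rewrite mulrC mulKf.
Qed.

Lemma rate_pm (R : realFieldType) (V E : finType) (C : V -> {set E})
  (hcov : forall e : E, exists i : V, e \in C i) b1 b2 (hb1 : (0 < b1)%N)
  (s1 : {set V} -> R) (s2 : {set E} -> R) :
  is_NE C b1 b2 s1 s2 -> (0 < b2)%N -> (b2 < m_star C)%N -> attack_nonempty s2 -> forall es,
  (forall e, pr C s1 es <= pr C s1 e) -> rate C s1 s2 = pr C s1 es.
Proof.
move=> NE hb2 hm ne es hmin.
have [m1 [m2 _]] := NE.
case: (ltP (pr C s1 es) 1) => hlt.
  by case: (good hcov hb1 NE hb2 hm hmin hlt).
have p1 : forall e, pr C s1 e = 1.
  move=> e; apply/eqP; rewrite eq_le; case/andP: (pr_bounds C e m1) => _ ->.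
  exact: le_trans hlt (hmin e).
have -> : pr C s1 es = 1 by apply: p1.
rewrite rate_T; apply: (sum_supp (f := fun T => kT C s1 T / #|T|%:R) m2) => T sT.
rewrite kT_in (eq_bigr (fun _ => 1)); last by move=> e _; apply: p1.
rewrite sumr_const.
have : #|T| != 0%N by rewrite cards_eq0; apply: ne.
by rewrite -(pnatr_eq0 R) => h; rewrite divff.
Qed.

Lemma Cmp (R : realFieldType) (V E : finType) (C : V -> {set E})
  (hcov : forall e : E, exists i : V, e \in C i) b1 b2 (hb1 : (0 < b1)%N)
  (s1 t1 : {set V} -> R) (s2 : {set E} -> R) :
  is_NE C b1 b2 s1 s2 -> (0 < b2)%N -> (b2 < m_star C)%N -> is_mixed b1 t1 -> forall es et,
  (forall e, pr C s1 es <= pr C s1 e) -> (forall e, pr C t1 et <= pr C t1 e) ->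
  pr C t1 et <= pr C s1 es.
Proof.
move=> NE hb2 hm mt es et hs ht.
have [m1 [m2 [h1 _]]] := NE.
case: (ltP (pr C s1 es) 1) => hlt; last first.
  by apply: le_trans hlt; case/andP: (pr_bounds C et mt).
have [U1e _ _] := good hcov hb1 NE hb2 hm hs hlt.
have := h1 t1 mt; rewrite U1e => Hle.
have Hge : b2%:R * pr C t1 et <= U1 C t1 s2.
  rewrite U1_T; apply: (G2 (f := kT C t1) m2) => T sT.
  have [cT _] := C1 hcov hb1 NE hm hs hlt sT.
  rewrite kT_in -cT mulr_natl -sumr_const; apply: ler_sum => e _; exact: ht.
have b2p : (0 : R) < b2%:R by rewrite ltr0n.
have : b2%:R * pr C t1 et <= b2%:R * pr C s1 es by apply: le_trans Hge Hle.
by rewrite ler_pM2l.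
Qed.

Lemma minbig (T : eqType) (r : seq T) (P : pred T) (F : T -> nat) d x :
  x \in r -> P x -> (\big[minn/d]_(i <- r | P i) F i <= F x)%N.
Proof.
elim: r => //= y r IH; rewrite inE big_cons; case/orP => [/eqP<-|xr] Px.
  by rewrite Px geq_minl.
by case: (P y); rewrite ?geq_min IH ?orbT.
Qed.

Lemma NC (R : realFieldType) (V E : finType) (C : V -> {set E}) b1
  (s1 : {set V} -> R) :
  (b1 < n_star C)%N -> is_mixed b1 s1 -> forall es,
  (forall e, pr C s1 es <= pr C s1 e) -> pr C s1 es < 1.
Proof.
move=> hn ms es hmin.
case: (ltP (pr C s1 es) 1) => // hge; exfalso.
have [s0 [s1e sb]] := ms.
have [S sS] : exists S, s1 S != 0.
  case: (boolP [exists S, s1 S != 0]) => [/existsP[S ?]|/existsPn H]; first by exists S.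
  exfalso; move: s1e; rewrite big1 => [/eqP|S _]; first by rewrite eq_sym oner_eq0.
  by have := H S; rewrite negbK => /eqP.
have cov : is_cover C S.
  apply/eqP/setP => e; rewrite inE; apply/negPn/negP => neS.
  have pe : pr C s1 e = 1.
    apply/eqP; rewrite eq_le; case/andP: (pr_bounds C e ms) => _ ->.
    exact: le_trans hge (hmin e).
  have H0 : \sum_S' s1 S' * (1 - (e \in CS C S')%:R) = 0.
    rewrite (eq_bigr (fun S' => s1 S' - s1 S' * (e \in CS C S')%:R)); last by move=> x _; ring.
    rewrite sumrB s1e.
    have -> : \sum_S' s1 S' * (e \in CS C S')%:R = pr C s1 e by [].
    by rewrite pe subrr.
  have H3 : forall S', true -> 0 <= s1 S' * (1 - (e \in CS C S')%:R).
    by move=> S' _; apply: mulr_ge0 => //; case: (e \in CS C S'); rewrite ?subrr ?subr0.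
  have := psumr_eq0P H3 H0 (i := S) (erefl true).
  move/eqP; rewrite mulf_eq0 (negbTE sS) /= (negbTE neS) /= subr0 oner_eq0.
  done.
have : (n_star C <= #|S|)%N by rewrite /n_star; apply: minbig => //; rewrite mem_index_enum.
have := sb S sS; lia.
Qed.

Theorem theorem3 (R : realFieldType) (V E : finType) (C : V -> {set E})
  (hV : (0 < #|V|)%N) (hE : (0 < #|E|)%N)
  (hcov : forall e : E, exists i : V, e \in C i)
  (b1 : nat) (hb1 : (0 < b1)%N) :
  exists r : R, 0 <= r <= 1 /\
    (forall (b2 : nat) (s1 : {set V} -> R) (s2 : {set E} -> R),
       (0 < b2)%N -> (b2 < m_star C)%N ->
       is_NE C b1 b2 s1 s2 -> attack_nonempty s2 ->
       rate C s1 s2 = r) /\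
    ((b1 < n_star C)%N ->
     forall (b2 : nat) (s1 : {set V} -> R) (s2 : {set E} -> R),
       (0 < b2)%N -> (b2 < m_star C)%N ->
       is_NE C b1 b2 s1 s2 ->
       (forall T, s2 T != 0 -> #|T| = b2) /\
       U1 C s1 s2 = b2%:R * r /\ U2 C s1 s2 = b2%:R * (1 - r)).
Proof.
have qual2 : (b1 < n_star C)%N -> forall b2 (s1 : {set V} -> R) (s2 : {set E} -> R),
    (0 < b2)%N -> (b2 < m_star C)%N -> is_NE C b1 b2 s1 s2 ->
    forall es, (forall e, pr C s1 es <= pr C s1 e) ->
    pr C s1 es < 1 /\ (forall T, s2 T != 0 -> #|T| = b2) /\ attack_nonempty s2.
  move=> hn b2 s1 s2 hb2 hm NE es hmin.
  have [m1 _] := NE.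
  have hlt := NC hn m1 hmin.
  have H := C1 hcov hb1 NE hm hmin hlt.
  split=> //; split; first by move=> T /H[].
  move=> T /H[cT _]; apply/negP => /eqP T0; move: cT; rewrite T0 cards0 => b20.
  by move: hb2; rewrite -b20.
case: (classic (exists b2 (s1 : {set V} -> R) (s2 : {set E} -> R),
   [/\ (0 < b2)%N, (b2 < m_star C)%N, is_NE C b1 b2 s1 s2 & attack_nonempty s2])).
  move=> [b2w [s1w [s2w [hb2w hmw NEw new]]]].
  have [esw hminw] := minex (pr C s1w) hE.
  have [m1w [m2w _]] := NEw.
  have eqr : forall b2 (s1 : {set V} -> R) (s2 : {set E} -> R),
      (0 < b2)%N -> (b2 < m_star C)%N -> is_NE C b1 b2 s1 s2 ->
      forall es, (forall e, pr C s1 es <= pr C s1 e) -> pr C s1 es = pr C s1w esw.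
    move=> b2 s1 s2 hb2 hm NE es hmin.
    have [m1 _] := NE.
    apply/eqP; rewrite eq_le; apply/andP; split.
      exact: (Cmp hcov hb1 NEw hb2w hmw m1 hminw hmin).
    exact: (Cmp hcov hb1 NE hb2 hm m1w hmin hminw).
  exists (pr C s1w esw); split; first exact: (pr_bounds C esw m1w).
  split.
    move=> b2 s1 s2 hb2 hm NE ne.
    have [es hmin] := minex (pr C s1) hE.
    by rewrite (rate_pm hcov hb1 NE hb2 hm ne hmin) (eqr _ _ _ hb2 hm NE _ hmin).
  move=> hn b2 s1 s2 hb2 hm NE.
  have [es hmin] := minex (pr C s1) hE.
  have [hlt [hT _]] := qual2 hn _ _ _ hb2 hm NE _ hmin.
  have [U1e U2e _] := good hcov hb1 NE hb2 hm hmin hlt.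
  by rewrite U1e U2e (eqr _ _ _ hb2 hm NE _ hmin).
move=> nex; exists 0; split; first by rewrite lexx ler01.
split.
  by move=> b2 s1 s2 hb2 hm NE ne; exfalso; apply: nex; exists b2, s1, s2.
move=> hn b2 s1 s2 hb2 hm NE; exfalso.
have [es hmin] := minex (pr C s1) hE.
have [_ [_ ne]] := qual2 hn _ _ _ hb2 hm NE _ hmin.
by apply: nex; exists b2, s1, s2.
Qed.
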